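(* Let $k\ge 3$, constants $c_1\ge\dots\ge c_k>0$ with $\sum c_i=1$, and for $n$ with all $c_in$ integers let $G_n$ be the complete $k$-partite graph with parts $V_1,\dots,V_k$, $|V_i|=c_in$. Let $w_0$ be a uniformly random initial weighting. If $c_i>\tfrac12$, then $$\mathbb{E}(m_i)\le 2c_in-n+\frac{2(1-c_i)}{2c_i-1}.$$
   Context: An initial weighting of a graph on vertex set $V$, $|V|=n$, is a bijection $w_0:V\to\{-n,\dots,-1\}$; here $w_0$ is uniform among all $n!$ such bijections. The quantity $m_i$ is defined by $$m_i=\max\Big\{x\ge 0:\ \exists\, y\ge 0 \text{ with } 2y+x\le n \text{ and } \Big|\bigcup_{j=1}^{2y+x}w_0^{-1}(-j)\cap V_i\Big|=y+x\Big\},$$ equivalently $m_i=\max_{0\le t\le n}X(t)$ where $X(t)=|\{v\in V_i: w_0(v)\ge -t\}|-|\{v\in V\setminus V_i: w_0(v)\ge -t\}|$. A complete $k$-partite graph with parts $V_1,\dots,V_k$ has an edge between $u$ and $v$ iff they lie in different parts. *)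

(* Defs.v *)
From HB Require Import structures.
From mathcomp Require Import all_boot all_order all_algebra all_fingroup.
Set Implicit Arguments. Unset Strict Implicit. Unset Printing Implicit Defensive.
Import Order.TTheory GRing.Theory Num.Theory.
Local Open Scope ring_scope.

(* Vertex set V = 'I_n; the k parts are given by part : 'I_n -> 'I_k,
   V_j = [set v | part v == j]. *)

(* The complete k-partite graph with parts V_1..V_k (edge iff different parts).
   Recorded for documentation; m_i only depends on V_i and w_0. *)
Definition complete_multipartite n k (part : 'I_n -> 'I_k) : rel 'I_n :=
  fun u v => part u != part v.

(* Initial weighting encoded by a permutation s of 'I_n:
   w_0(v) = -(s v + 1), a bijection V -> {-n,...,-1}.  Every such bijection
   arises from exactly one s, so uniform w_0 = uniform s. *)
Definition weight n (s : {perm 'I_n}) (v : 'I_n) : int := - ((s v).+1)%:Z.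

Definition Xt n k (part : 'I_n -> 'I_k) (i : 'I_k) (s : {perm 'I_n}) (t : nat)
  : int :=
  (#|[set v | (part v == i) && (- (t%:Z) <= weight s v)]|%:Z
   - #|[set v | (part v != i) && (- (t%:Z) <= weight s v)]|%:Z).

(* m_i = max_{0 <= t <= n} X(t)  (X(0) = 0, so the bottom 0 is harmless,
   matching the requirement x >= 0 in the first definition). *)
Definition m_i n k (part : 'I_n -> 'I_k) (i : 'I_k) (s : {perm 'I_n}) : int :=
  \big[Num.max/0]_(t < n.+1) Xt part i s t.

Definition E_m (R : realFieldType) n k (part : 'I_n -> 'I_k) (i : 'I_k) : R :=
  (\sum_(s : {perm 'I_n}) (m_i part i s)%:~R) / (n`!)%:R.

(* Main.v *)
Require Import Defs.
From HB Require Import structures.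
From mathcomp Require Import all_boot all_order all_algebra all_fingroup.
From mathcomp Require Import zify ring lra.
Set Implicit Arguments. Unset Strict Implicit. Unset Printing Implicit Defensive.
Import Order.TTheory GRing.Theory Num.Theory.

Definition stepD (d : nat) (x : bool) := if x then d.-1 else d.+1.
Definition Dw (s : seq bool) := foldl stepD 0 s.
Fixpoint bs n : seq (seq bool) :=
  if n is n'.+1 then [seq rcons s x | s <- bs n', x <- [:: true; false]]
  else [:: [::]].
Lemma Dw_rcons s x : Dw (rcons s x) = stepD (Dw s) x.
Proof. by rewrite /Dw foldl_rcons. Qed.


Lemma count_bsS P n : count P (bs n.+1) =
  count (fun s => P (rcons s true)) (bs n) + count (fun s => P (rcons s false)) (bs n).
Proof.
rewrite /=; elim: (bs n) => [|s L IH] //=.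
rewrite IH; lia.
Qed.

Lemma mem_bs n s : (s \in bs n) = (size s == n).
Proof.
elim: n s => [|n IH] s; first by case: s.
apply/idP/idP.
  by case/allpairsP => [[t x]] /= [Ht _ ->]; rewrite size_rcons eqSS -IH.
case/lastP: s => [|t x] //; rewrite size_rcons eqSS -IH => Ht.
by apply/allpairsP; exists (t, x) => /=; split => //; case: x.
Qed.

Lemma uniq_bs n : uniq (bs n).
Proof.
elim: n => [|n IH] //.
change (uniq [seq rcons s x | s <- bs n, x <- [:: true; false]]).
apply: allpairs_uniq => //.
move=> [s1 x1] [s2 x2] _ _ /= E.
have := congr1 (fun s => last true s) E; rewrite !last_rcons => Ex.
by move: E; rewrite Ex => /rcons_inj [->].
Qed.

Lemma Dw_le s : Dw s <= size s.
Proof.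
elim/last_ind: s => [|s x IH] //.
rewrite Dw_rcons size_rcons /stepD; case: x; lia.
Qed.

Lemma count_a n a : count (fun s => count id s == a) (bs n) = 'C(n, a).
Proof.
elim: n a => [|n IH] a; first by case: a.
rewrite count_bsS.
under eq_count => s do rewrite -cats1 count_cat /= addn0.
under [X in _ + X]eq_count => s do rewrite -cats1 count_cat /= addn0.
case: a => [|a].
  rewrite bin0.
  transitivity (0 + count (fun s => count id s == 0) (bs n)).
    congr (_ + _); last by apply: eq_count => s; rewrite addn0.
    by apply/eqP; rewrite eqn0Ngt -has_count; apply/hasPn => s _; rewrite addn1.
  by rewrite IH bin0.
rewrite binS -!IH addnC; congr (_ + _); apply: eq_count => s.
  by rewrite addn0.
by rewrite addn1 eqSS.
Qed.

Lemma count_ah n a h : 0 < h -> n < a + a + h ->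
  count (fun s => (count id s == a) && (h <= Dw s)) (bs n) = 'C(n, a + h).
Proof.
elim: n a h => [|n IH] a h hpos hn.
  by rewrite /= /Dw /=; case: h hpos hn => // h _ _; rewrite andbF addnS.
rewrite count_bsS.
under eq_count => s do rewrite Dw_rcons -cats1 count_cat /= addn0.
under [X in _ + X]eq_count => s do rewrite Dw_rcons -cats1 count_cat /= addn0.
case: a hn => [|a] hn.
  rewrite add0n.
  case: h hpos hn => [|[|h]] // _ hn.
  transitivity (0 + count (fun s => (count id s == 0) && (h.+1 <= Dw s)) (bs n)).
    congr (_ + _).
      by apply/eqP; rewrite eqn0Ngt -has_count; apply/hasPn => s _; rewrite addn1.
    by apply: eq_count => s; rewrite addn0.
  rewrite add0n IH; [|by []|lia].
  rewrite add0n (@bin_small n) ?(@bin_small n.+1); lia.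
transitivity (count (fun s => (count id s == a) && (h.+1 <= Dw s)) (bs n) +
  count (fun s => (count id s == a.+1) && (h.-1 <= Dw s)) (bs n)).
  congr (_ + _); apply: eq_count => s.
    rewrite addn1 eqSS; congr andb; case: (Dw s) => [|d] /=; lia.
  by rewrite addn0; congr andb; lia.
rewrite IH; [|by []|lia].
rewrite -addSnnS.
case: h hpos hn => [|[|h]] hpos hn; first by [].
  under eq_count => s do rewrite leq0n andbT.
  by rewrite count_a addn1 binS addnC.
rewrite IH; [|by []|lia].
rewrite (_ : a.+1 + h.+2.-1 = (a + h).+2); last lia.
rewrite (_ : a.+1 + h.+2 = (a + h).+3); last lia.
by rewrite binS addnC.
Qed.

Lemma sum_lt n d : \sum_(h < n) (h < d) = minn d n.
Proof.
elim: n => [|n IH]; first by rewrite big_ord0 minn0.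
rewrite big_ord_recr /= IH; case: (ltnP n d) => H; lia.
Qed.

Lemma sumD n a : n <= a + a ->
  \sum_(s <- bs n | count id s == a) Dw s = \sum_(h < n) 'C(n, a + h.+1).
Proof.
move=> hn.
rewrite big_seq_cond.
transitivity (\sum_(s <- bs n | (s \in bs n) && (count id s == a)) \sum_(h < n) (h < Dw s)).
  apply: eq_bigr => s /andP [Hs _]; rewrite sum_lt.
  by move: Hs; rewrite mem_bs => /eqP <-; rewrite (minn_idPl (Dw_le s)).
rewrite exchange_big /=; apply: eq_bigr => h _.
rewrite -big_seq_cond -(count_ah (n:=n) (a:=a) (h:=h.+1)); [|by []|lia].
rewrite -sum1_count big_mkcond [RHS]big_mkcond /=; apply: eq_bigr => s _.
by case: (count id s == a); case: (h < Dw s).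
Qed.

Lemma geom_bound n a : a + a >= n -> a <= n ->
  (\sum_(h < n) 'C(n, a + h.+1)) * (a.+1 - (n - a)) <= 'C(n, a) * (n - a).
Proof.
move=> h1 h2.
set b := n - a.
have key j : 'C(n, a + j.+1) * a.+1 <= 'C(n, a + j) * b.
  have E := mul_bin_left n (a + j).
  apply: (@leq_trans ('C(n, a + j.+1) * (a + j).+1)).
    by apply: leq_mul => //; lia.
  rewrite mulnC (addnS a j) E mulnC; apply: leq_mul => //; lia.
set S := \sum_(h < n) _.
have H1 : S * a.+1 <= b * ('C(n, a) + S).
  apply: (@leq_trans (\sum_(h < n) 'C(n, a + h) * b)).
    rewrite /S big_distrl /=; apply: leq_sum => j _; exact: key.
  rewrite -big_distrl /= mulnC leq_mul2l; apply/orP; right.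
  apply: (@leq_trans (\sum_(h < n.+1) 'C(n, a + h))).
    by rewrite big_ord_recr /= leq_addr.
  rewrite big_ord_recl /= addn0 leq_add2l; apply: eq_leq; apply: eq_bigr => j _.
  by rewrite /bump add1n.
have Hb : b <= a by lia.
rewrite mulnBr mulnC; nia.
Qed.

Local Open Scope ring_scope.

Definition Xs (f : seq bool) (t : nat) : int :=
  (count id (take t f))%:Z - (count negb (take t f))%:Z.

Lemma Xs_rcons_le f x t : (t <= size f)%N -> Xs (rcons f x) t = Xs f t.
Proof. by move=> H; rewrite /Xs -cats1 takel_cat. Qed.

Lemma Xs_rcons_gt f x t : (size f < t)%N ->
  Xs (rcons f x) t = Xs f (size f) + (if x then 1 else -1).
Proof.
move=> H; rewrite /Xs take_oversize ?size_rcons // take_size -cats1 !count_cat /=.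
by case: x => /=; rewrite ?addn0 ?addn1; lia.
Qed.

Lemma walk_char f : (forall t, Xs f t <= Xs f (size f) + (Dw f)%:Z) /\
  exists2 t, (t <= size f)%N & Xs f t = Xs f (size f) + (Dw f)%:Z.
Proof.
elim/last_ind: f => [|f x [IH1 [t0 Ht0 IH2]]].
  split; first by move=> t; rewrite /Xs /= /Dw /= addr0.
  by exists 0%N => //; rewrite /Xs /Dw /= addr0.
have Hn : Xs (rcons f x) (size (rcons f x)) = Xs f (size f) + (if x then 1 else -1).
  by rewrite Xs_rcons_gt // size_rcons.
rewrite Hn Dw_rcons /stepD size_rcons.
have Hle : forall t, Xs (rcons f x) t = if (t <= size f)%N then Xs f t
    else Xs f (size f) + (if x then 1 else -1).
  move=> t; case: leqP => H; first exact: Xs_rcons_le.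
  exact: Xs_rcons_gt.
case: x Hn Hle => Hn Hle.
  case E: (Dw f) IH1 IH2 => [|d] IH1 IH2.
    split.
      move=> t; rewrite Hle; case: leqP => _; have := IH1 t; rewrite /=; lia.
    by exists (size f).+1 => //; rewrite Hle ltnn /=; lia.
  split.
    move=> t; rewrite Hle; case: leqP => _.
      have := IH1 t; rewrite /=; lia.
    rewrite /=; lia.
  by exists t0; [apply: leqW | rewrite Hle Ht0 IH2 /=; lia].
split.
  move=> t; rewrite Hle; case: leqP => _.
    have := IH1 t; lia.
  lia.
by exists t0; [apply: leqW | rewrite Hle Ht0 IH2; lia].
Qed.

Lemma le_bigmax_gen m (F : 'I_m -> int) (x : int) (i : 'I_m) :
  F i <= \big[Num.max/x]_(t < m) F t.
Proof.
elim: m F i => [|m IH] F i; first by case: i.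
rewrite big_ord_recl; case: (unliftP ord0 i) => [j ->|->].
  by rewrite le_max (IH (fun t => F (lift ord0 t))) orbT.
by rewrite le_max lexx.
Qed.

Lemma bigmax_char m (F : 'I_m -> int) (x v : int) (i : 'I_m) :
  x <= v -> (forall t, F t <= v) -> F i = v -> \big[Num.max/x]_(t < m) F t = v.
Proof.
move=> hx hF hi; apply/le_anti/andP; split.
  by apply: (big_ind (fun y => y <= v)) => // a b ha hb; rewrite ge_max ha hb.
by rewrite -hi le_bigmax_gen.
Qed.

Lemma card_count (T : finType) (P : pred T) : #|[set x | P x]| = count P (enum T).
Proof. by rewrite cardsE cardE /enum_mem size_filter [in RHS](@eq_filter _ _ predT) // filter_predT. Qed.

Lemma count_take_enum n (G : 'I_n -> bool) t :
  count G (take t (enum 'I_n)) = #|[set j : 'I_n | (j < t)%N && G j]|.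
Proof.
rewrite card_count -{2}(cat_take_drop t (enum 'I_n)) count_cat.
have Ht : {in take t (enum 'I_n), G =1 (fun j : 'I_n => (j < t)%N && G j)}.
  move=> j Hj; have : val j \in map val (take t (enum 'I_n)) by apply: map_f.
  rewrite map_take val_enum_ord take_iota mem_iota add0n => /andP [_ H].
  by rewrite (leq_trans H (geq_minl _ _)).
have Hd : {in drop t (enum 'I_n), pred0 =1 (fun j : 'I_n => (j < t)%N && G j)}.
  move=> j Hj; have : val j \in map val (drop t (enum 'I_n)) by apply: map_f.
  rewrite map_drop val_enum_ord drop_iota mem_iota add0n => /andP [H _].
  by rewrite /= ltnNge H.
by rewrite (eq_in_count Ht) -(eq_in_count Hd) count_pred0 addn0.
Qed.

Lemma card_perm_reindex n (s : {perm 'I_n}) (P : pred 'I_n) :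
  #|[set v | P v]| = #|[set j | P ((s^-1)%g j)]|.
Proof.
rewrite -(card_imset _ (@perm_inj _ (s^-1)%g)); apply: eq_card => j.
rewrite inE; apply/idP/imsetP => [H|[v]].
  by exists (s j); rewrite ?inE permK.
by rewrite inE => Hv ->.
Qed.

Definition fs n k (part : 'I_n -> 'I_k) (i : 'I_k) (s : {perm 'I_n}) : seq bool :=
  [seq part ((s^-1)%g j) == i | j <- enum 'I_n].

Lemma size_fs n k (part : 'I_n -> 'I_k) i s : size (fs part i s) = n.
Proof. by rewrite size_map size_enum_ord. Qed.

Lemma Xt_eq n k (part : 'I_n -> 'I_k) i s t : Xt part i s t = Xs (fs part i s) t.
Proof.
rewrite /Xt /Xs /fs -map_take !count_map !count_take_enum.
have E1 (P : pred 'I_n) : #|[set v | P v && (- (t%:Z) <= weight s v)]| =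
    #|[set j : 'I_n | (j < t)%N && P ((s^-1)%g j)]|.
  rewrite (card_perm_reindex s); apply: eq_card => j.
  by rewrite !inE /weight permKV lerN2 lez_nat andbC.
rewrite (E1 (fun v => part v == i)) (E1 (fun v => part v != i)).
by [].
Qed.

Lemma count_fs n k (part : 'I_n -> 'I_k) i s :
  count id (fs part i s) = #|[set v | part v == i]|.
Proof.
by rewrite /fs count_map (card_perm_reindex s) card_count.
Qed.

Lemma m_i_eq n k (part : 'I_n -> 'I_k) i s :
  m_i part i s = (#|[set v | part v == i]|)%:Z - (n - #|[set v | part v == i]|)%:Z
     + (Dw (fs part i s))%:Z.
Proof.
set f := fs part i s.
have [H1 [t0 Ht0 H2]] := walk_char f.
have Hv : Xs f (size f) = (#|[set v | part v == i]|)%:Z - (n - #|[set v | part v == i]|)%:Z.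
  rewrite /Xs take_size -(count_fs part i s) -/f -(size_fs part i s) -/f.
  by rewrite -(count_predC id f) addKn.
rewrite -Hv /m_i.
rewrite size_fs in Ht0.
apply: (bigmax_char (i := Ordinal (n:=n.+1) (m:=t0) Ht0)).
- by have := H1 0%N; rewrite /Xs take0.
- by move=> t; rewrite Xt_eq.
- by rewrite Xt_eq /= H2 size_fs.
Qed.


Lemma count_bool (P : pred bool) (s : seq bool) :
  count P s = (P true * count id s + P false * (size s - count id s))%N.
Proof.
rewrite -(count_predC id s) addKn.
elim: s => [|x s IH]; first by rewrite /= !muln0.
rewrite /= IH; case: x; case: (P true); case: (P false) => /=; lia.
Qed.

Section Fiber.
Variables (n k : nat) (part : 'I_n -> 'I_k) (i : 'I_k).
Local Notation fs := (fs part i).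
Local Notation F s := (fun j => part ((s^-1)%g j) == i).

Definition fib (f : seq bool) : nat := \sum_(s : {perm 'I_n}) (fs s == f).

Lemma fs_eqE s s' : (fs s == fs s') <-> (forall j, F s j = F s' j).
Proof.
split.
  by move/eqP/eq_in_map => H j; apply: H; rewrite mem_enum.
by move=> H; apply/eqP/eq_in_map => j _; apply: H.
Qed.

Lemma fib_eq s0 f : size f = n -> count id f = count id (fs s0) -> fib f = fib (fs s0).
Proof.
move=> Hs Hc.
have Hp : perm_eq f (fs s0).
  by apply/seq.permP => P; rewrite (count_bool P f) (count_bool P (fs s0)) Hc Hs size_fs.
pose t := [tuple F s0 j | j < n].
have Ht : val t = fs s0 by [].
rewrite -Ht in Hp.
case/tuple_permP: Hp => p Hf.
have Hf' : f = [seq F s0 (p j) | j <- enum 'I_n].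
  rewrite Hf /=; apply: eq_map => j.
  by rewrite /t tnth_mktuple.
rewrite /fib (reindex_inj (mulIg (p^-1)%g)) /=.
apply: eq_bigr => s _.
have E : forall j, F (s * p^-1)%g j = F s (p j).
  by move=> j; rewrite invMg invgK permM.
congr (nat_of_bool _); apply/idP/idP => H.
  apply: (proj2 (fs_eqE s s0)) => j; rewrite -(permKV p j).
  have := H; rewrite Hf' /fs => /eqP /eq_in_map H'.
  have := H' ((p^-1)%g j) (mem_enum _ _).
  by rewrite E.
apply/eqP; rewrite Hf' /fs; apply/eq_in_map => j _.
by rewrite E; apply: (proj1 (fs_eqE s s0)).
Qed.

Lemma fib0 f : count id f != #|[set v | part v == i]| -> fib f = 0%N.
Proof.
move=> H; apply: big1 => s _.
case E: (fs s == f) => //; move/eqP: E H => <-; by rewrite count_fs eqxx.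
Qed.

Lemma sum_fiber (G : seq bool -> nat) :
  (\sum_(s : {perm 'I_n}) G (fs s) =
   fib (fs 1%g) * \sum_(f <- bs n | count id f == #|[set v | part v == i]|) G f)%N.
Proof.
transitivity (\sum_(s : {perm 'I_n}) \sum_(f <- bs n) (fs s == f) * G f)%N.
  apply: eq_bigr => s _.
  rewrite (bigD1_seq (fs s)) ?uniq_bs ?mem_bs ?size_fs //= eqxx mul1n.
  rewrite big1 ?addn0 // => f /negbTE; rewrite eq_sym => ->; by [].
rewrite exchange_big /= big_distrr /= [RHS]big_mkcond /= [LHS]big_seq [RHS]big_seq.
apply: eq_bigr => f Hf.
rewrite -big_distrl /=.
case: ifP => Hc.
  rewrite -/(fib f) (@fib_eq 1%g f) //.
    by apply/eqP; rewrite -mem_bs.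
  by rewrite count_fs; apply/eqP.
by rewrite -/(fib f) fib0 ?Hc.
Qed.
End Fiber.

Theorem mainTheorem7 (R : realFieldType) (k : nat) (c : 'I_k -> R)
  (hk : (3 <= k)%N)
  (hdec : forall j j' : 'I_k, (j <= j')%N -> c j' <= c j)
  (hpos : forall j, 0 < c j)
  (hsum : \sum_(j < k) c j = 1)
  (n : nat) (part : 'I_n -> 'I_k)
  (hsize : forall j, (#|[set v | part v == j]|)%:R = c j * n%:R)
  (i : 'I_k) (hci : 1 / 2 < c i) :
  E_m R part i <= 2 * c i * n%:R - n%:R + 2 * (1 - c i) / (2 * c i - 1).
Proof.
set a := #|[set v | part v == i]|.
have hcle : c i <= 1.
  rewrite -hsum (bigD1 i) //= lerDl; apply: sumr_ge0 => j _; exact: ltW.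
have ha : (a%:R : R) = c i * n%:R by apply: hsize.
have han : (a <= n)%N by have := max_card [set v | part v == i]; rewrite card_ord.
have h2a : (n <= a + a)%N.
  rewrite -(ler_nat R) natrD ha.
  have hn : (0 : R) <= n%:R by [].
  nra.
set S := (\sum_(h < n) 'C(n, a + h.+1))%N.
set C := 'C(n, a).
set K := fib part i (fs part i 1%g).
have HF : n`! = (K * C)%N.
  have := sum_fiber part i (fun _ => 1%N).
  rewrite sum_nat_const card_Sn muln1 sum1_count => ->.
  by rewrite count_a.
have HD : (\sum_(s : {perm 'I_n}) Dw (fs part i s) = K * S)%N.
  by rewrite sum_fiber sumD.
have Hg : (S * (a.+1 - (n - a)) <= C * (n - a))%N := geom_bound h2a han.
have HC : (0 < C)%N by rewrite bin_gt0.
have HK : (0 < K)%N by move: (fact_gt0 n); rewrite HF muln_gt0 => /andP [].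
rewrite /E_m.
under eq_bigr => s _ do rewrite m_i_eq intrD intrB.
rewrite -/a big_split /= sumr_const card_Sn -!pmulrn -natr_sum HD.
rewrite -mulr_natr HF natrB // !natrM ha.
have HKr : (0 : R) < K%:R by rewrite ltr0n.
have HCr : (0 : R) < C%:R by rewrite ltr0n.
have HSr : (0 : R) <= S%:R by [].
have HgR : (S%:R : R) * (c i * n%:R + 1 - (n%:R - c i * n%:R)) <= C%:R * (n%:R - c i * n%:R).
  have := Hg; rewrite -(ler_nat R) !natrM natrB; last lia.
  by rewrite natrB // -addn1 natrD ha.
set Sr := (S%:R : R) in HSr HgR *.
set Cr := (C%:R : R) in HCr HgR *.
set Kr := (K%:R : R) in HKr *.
set N := (n%:R : R) in HgR *.
have HN : 0 <= N by rewrite /N.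
set Q := 2 * (1 - c i) / (2 * c i - 1).
have hu : 0 < 2 * c i - 1 by lra.
have hQ : Sr <= Q * Cr.
  have H1 : Sr * (2 * c i - 1) <= (1 - c i) * Cr by nra.
  rewrite /Q mulrAC ler_pdivlMr //; nra.
have := ler_wpM2l (ltW HKr) hQ => hKQ.
rewrite ler_pdivrMr ?mulr_gt0 //.
nra.
Qed.
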